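(* Let $\alpha\in[0,1]$ and let $F$ be the space of weakly increasing functions from $[0,1]$ to $[0,1]$, equipped with the uniform norm. The functional $\phi:F\to[0,1]$ given by \[ \phi(f)=\inf_{0\le x<1}\frac{1-f(x\alpha)}{1-x} \] is continuous at every $f\in F$ with $f(\alpha)<1$. *)

(* Defs.v *)
From HB Require Import structures.
From mathcomp Require Import all_boot all_order all_algebra.
From mathcomp Require Import all_classical all_reals.
From mathcomp Require Import interval_inference topology normedtype.
Set Implicit Arguments. Unset Strict Implicit. Unset Printing Implicit Defensive.
Import Order.TTheory GRing.Theory Num.Theory.
Local Open Scope classical_set_scope.
Local Open Scope ring_scope.

(* f belongs to F: weakly increasing from [0,1] to [0,1]
   (only the values on [0,1] matter). *)
Definition inF {R : realType} (f : R -> R) : Prop :=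
  (forall x, x \in `[0, 1] -> 0 <= f x <= 1) /\
  (forall x y, x \in `[0, 1] -> y \in `[0, 1] -> x <= y -> f x <= f y).

Definition udist {R : realType} (f g : R -> R) : R :=
  sup [set `|f t - g t| | t in `[0, 1]%classic].

Definition phi {R : realType} (alpha : R) (f : R -> R) : R :=
  inf [set (1 - f (x * alpha)) / (1 - x) | x in `[0, 1[%classic].

(* Main.v *)
Require Import Defs.
From HB Require Import structures.
From mathcomp Require Import all_boot all_order all_algebra.
From mathcomp Require Import all_classical all_reals.
From mathcomp Require Import interval_inference topology normedtype.
From mathcomp Require Import ring lra.
Import Order.TTheory GRing.Theory Num.Theory.
Local Open Scope classical_set_scope.
Local Open Scope ring_scope.

Section Aux.
Context {R : realType}.

Lemma mem01 (x : R) : (x \in `[0, 1]) = (0 <= x <= 1).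
Proof. by rewrite in_itv. Qed.

Lemma mem01o (x : R) : (x \in `[0, 1[) = (0 <= x < 1).
Proof. by rewrite in_itv. Qed.

Lemma xa_mem {alpha x : R} : 0 <= alpha <= 1 -> x \in `[0, 1[ -> x * alpha \in `[0, 1].
Proof.
rewrite mem01 mem01o => /andP[a0 a1] /andP[x0 x1].
rewrite mulr_ge0 //=; rewrite -[1]mulr1; apply: ler_pM => //; exact: ltW.
Qed.

Lemma S_inf {alpha : R} {f : R -> R} : 0 <= alpha <= 1 -> inF f ->
  has_inf [set (1 - f (x * alpha)) / (1 - x) | x in `[0, 1[%classic].
Proof.
move=> ha [Hf _]; split.
  exists ((1 - f (0 * alpha)) / (1 - 0)); exists 0 => //=.
  by rewrite mem01o lexx ltr01.
exists 0 => _ [x /= hx <-].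
have /andP[_ h1] := Hf _ (xa_mem ha hx).
move: hx; rewrite mem01o => /andP[_ x1].
by apply: divr_ge0; rewrite subr_ge0 // ltW.
Qed.

Lemma phi_le {alpha : R} {f x} : 0 <= alpha <= 1 -> inF f -> x \in `[0, 1[ ->
  phi alpha f <= (1 - f (x * alpha)) / (1 - x).
Proof.
move=> ha hf hx; have [_ hl] := S_inf ha hf.
by apply: ge_inf => //; exists x.
Qed.

Lemma phi_le1 {alpha : R} {f} : 0 <= alpha <= 1 -> inF f -> phi alpha f <= 1.
Proof.
move=> ha [Hf Hm]; apply: le_trans (phi_le ha (conj Hf Hm) (_ : 0 \in `[0, 1[)) _.
  by rewrite mem01o lexx ltr01.
rewrite subr0 divr1 mul0r gerBl.
have h0 : (0:R) \in `[0, 1] by rewrite mem01 lexx ler01.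
by have /andP[] := Hf 0 h0.
Qed.

Lemma udist_ge {f g : R -> R} {t} : inF f -> inF g -> t \in `[0, 1] ->
  `|f t - g t| <= udist f g.
Proof.
move=> [Hf _] [Hg _] ht; apply: sup_upper_bound; last by exists t.
split; first by exists `|f t - g t|; exists t.
exists 1 => _ [s /= hs <-].
have /andP[f0 f1] := Hf _ hs; have /andP[g0 g1] := Hg _ hs.
rewrite ler_norml; apply/andP; split; lra.
Qed.

End Aux.

Theorem lemma7 (R : realType) (alpha : R) (f : R -> R) :
  0 <= alpha <= 1 -> inF f -> f alpha < 1 ->
  forall eps : R, 0 < eps -> exists2 delta : R, 0 < delta &
    forall g : R -> R, inF g -> udist f g < delta ->
      `|phi alpha g - phi alpha f| < eps.
Proof.
move=> ha hf fa1 eps e0.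
have a01 : alpha \in `[0, 1] by rewrite mem01.
set c := 1 - f alpha.
have c0 : 0 < c by rewrite subr_gt0.
have e20 : 0 < eps / 2 by rewrite divr_gt0.
have [_ [x0 hx0 <-] lt0] := @inf_adherent R _ (eps / 2) e20 (S_inf ha hf).
have {}lt0 : (1 - f (x0 * alpha)) / (1 - x0) < phi alpha f + eps / 2 := lt0.
have {}hx0 : x0 \in `[0, 1[ := hx0.
have u00 : 0 < 1 - x0 by move: hx0; rewrite mem01o subr_gt0 => /andP[].
exists (Num.min (c / 2) (Num.min (eps * c / 4) (eps / 2 * (1 - x0)))).
  by rewrite !lt_min !divr_gt0 ?mulr_gt0.
move=> g hg; set d := udist f g.
rewrite !lt_min => /andP[dc /andP[dec dex]].
have dist t : t \in `[0, 1] -> f t - d <= g t <= f t + d.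
  move=> ht; have := udist_ge hf hg ht; rewrite -/d ler_norml => /andP[h1 h2].
  apply/andP; split; lra.
have phif1 := phi_le1 ha hf.
rewrite ltr_norml; apply/andP; split.
-
  suff : phi alpha f - eps / 2 <= phi alpha g by lra.
  apply: lb_le_inf; first by case: (S_inf ha hg).
  move=> _ [x hx <-].
  have {}hx : x \in `[0, 1[ := hx.
  have hxa := xa_mem ha hx.
  have u0 : 0 < 1 - x by move: hx; rewrite mem01o subr_gt0 => /andP[].
  have /andP[g1 g2] := dist _ hxa.
  case: (leP (c / 2) (1 - x)) => hu.
  + have pf := phi_le ha hf hx.
    have : d / (1 - x) <= eps / 2.
      rewrite ler_pdivrMr //.
      apply: le_trans (ltW dec) _.
      have -> : eps * c / 4 = eps / 2 * (c / 2) by rewrite -!mulrA; congr (_ * _); field.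
      by apply: ler_wpM2l => //; exact: ltW.
    have -> : (1 - g (x * alpha)) / (1 - x) =
       (1 - f (x * alpha)) / (1 - x) - (g (x * alpha) - f (x * alpha) ) / (1 - x).
      by rewrite -mulrBl; congr (_ * _); ring.
    have : (g (x * alpha) - f (x * alpha)) / (1 - x) <= d / (1 - x).
      by apply: ler_wpM2r; [rewrite invr_ge0 ltW // | lra].
    lra.
  + have xal : x * alpha <= alpha.
      move: hx ha; rewrite mem01o => /andP[_ x1] /andP[a0 _].
      by rewrite ler_piMl // ltW.
    have gm := (proj2 hg) _ _ hxa a01 xal.
    have /andP[_ ga] := dist _ a01.
    have : 1 <= (1 - g (x * alpha)) / (1 - x).
      rewrite ler_pdivlMr // mul1r.
      have : d < c / 2 by [].
      rewrite /c in hu *; lra.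
    lra.
-
  have pg := phi_le ha hg hx0.
  have hxa := xa_mem ha hx0.
  have /andP[g1 g2] := dist _ hxa.
  have : (1 - g (x0 * alpha)) / (1 - x0) <= (1 - f (x0 * alpha)) / (1 - x0) + d / (1 - x0).
    rewrite -mulrDl; apply: ler_wpM2r; [rewrite invr_ge0 ltW // | lra].
  have : d / (1 - x0) < eps / 2 by rewrite ltr_pdivrMr // mulrC.
  lra.
Qed.
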